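(* There exist constants $\varepsilon_0>0$ and $C>0$ with the following property. Let $r>0$, $\delta>0$, $R:=r/\delta$ and $\varepsilon:=R+\tfrac12-\lfloor R+\tfrac12\rfloor$. If $\varepsilon\in[0,\varepsilon_0]$ and $R$ is sufficiently large, then for every unit-norm tight frame $\mathcal{F}$ of $\mathbb{R}^2$, $$\mathcal{E}_\delta(r,\mathcal{F})\ge C\,\frac{\delta^{3/2}}{\sqrt r}.$$
   Context: A finite family $\mathcal{F}=\{e_j\}_{j=1}^N\subset\mathbb{R}^2$ is a unit-norm tight frame if $\|e_j\|=1$ for all $j$ and $\sum_j e_je_j^T=\frac{N}{2}I_2$. For $\delta>0$, $Q_\delta(t):=\delta\lfloor t/\delta+1/2\rfloor$, and $E_\delta(x,\mathcal{F}):=\bigl\|x-\frac{2}{N}\sum_{j=1}^N Q_\delta(\langle x,e_j\rangle)e_j\bigr\|$ (Euclidean norm). For $r>0$ set $x_\psi:=r[\cos\psi,\sin\psi]^T$ and $$\mathcal{E}_\delta(r,\mathcal{F}):=\Bigl(\int_0^{2\pi}E_\delta(x_\psi,\mathcal{F})^2\,d\psi\Bigr)^{1/2}.$$ *)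

(* Defs.v *)
From Stdlib Require Import Reals Lra ZArith.
Open Scope R_scope.

(* floor: Int_part-like; up x is the unique integer with x < up x <= x + 1 *)
Definition Zfloor (x : R) : Z := (up x - 1)%Z.

Fixpoint rsum (n : nat) (f : nat -> R) : R :=
  match n with
  | O => 0
  | S k => rsum k f + f k
  end.

Definition Qd (d t : R) : R := d * IZR (Zfloor (t / d + / 2)).

(* A frame of N vectors e_j = (ex j, ey j), j = 0..N-1, in R^2:
   unit norm and sum_j e_j e_j^T = (N/2) I_2. *)
Definition UNTF (N : nat) (ex ey : nat -> R) : Prop :=
  (0 < N)%nat /\
  (forall j, (j < N)%nat -> ex j ^ 2 + ey j ^ 2 = 1) /\
  rsum N (fun j => ex j * ex j) = INR N / 2 /\
  rsum N (fun j => ey j * ey j) = INR N / 2 /\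
  rsum N (fun j => ex j * ey j) = 0.

Definition Ed (d : R) (N : nat) (ex ey : nat -> R) (x1 x2 : R) : R :=
  let c j := Qd d (x1 * ex j + x2 * ey j) in
  let y1 := x1 - 2 / INR N * rsum N (fun j => c j * ex j) in
  let y2 := x2 - 2 / INR N * rsum N (fun j => c j * ey j) in
  sqrt (y1 ^ 2 + y2 ^ 2).

Definition Ed2 (d r : R) (N : nat) (ex ey : nat -> R) (psi : R) : R :=
  Ed d N ex ey (r * cos psi) (r * sin psi) ^ 2.

(* Main.v *)
Require Import Defs.
From Stdlib Require Import Reals Lra Lia Psatz ZArith List.
From Stdlib Require Import FunctionalExtensionality IndefiniteDescription.
Open Scope R_scope.

Lemma dl_plus f g x a b : derivable_pt_lim f x a -> derivable_pt_lim g x b ->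
  derivable_pt_lim (fun y => f y + g y) x (a + b).
Proof. intros; apply (derivable_pt_lim_plus f g); auto. Qed.
Lemma dl_minus f g x a b : derivable_pt_lim f x a -> derivable_pt_lim g x b ->
  derivable_pt_lim (fun y => f y - g y) x (a - b).
Proof. intros; apply (derivable_pt_lim_minus f g); auto. Qed.
Lemma dl_mult f g x a b : derivable_pt_lim f x a -> derivable_pt_lim g x b ->
  derivable_pt_lim (fun y => f y * g y) x (a * g x + f x * b).
Proof. intros; apply (derivable_pt_lim_mult f g); auto. Qed.
Lemma dl_const c x : derivable_pt_lim (fun _ => c) x 0.
Proof. apply (derivable_pt_lim_const c). Qed.
Lemma dl_id x : derivable_pt_lim (fun y => y) x 1.
Proof. apply derivable_pt_lim_id. Qed.
Lemma dl_comp f g x a b : derivable_pt_lim f x a -> derivable_pt_lim g (f x) b ->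
  derivable_pt_lim (fun y => g (f y)) x (b * a).
Proof. intros; apply (derivable_pt_lim_comp f g); auto. Qed.
Lemma dl_eq f x a b : a = b -> derivable_pt_lim f x a -> derivable_pt_lim f x b.
Proof. intros ->; auto. Qed.

Lemma MVT_open (f f' : R -> R) a b : a < b ->
  (forall c, a < c < b -> derivable_pt_lim f c (f' c)) ->
  (forall c, a <= c <= b -> continuity_pt f c) ->
  exists c, a < c < b /\ f b - f a = f' c * (b - a).
Proof.
  intros hab hd hc.
  assert (pr1 : forall c, a < c < b -> derivable_pt f c).
  { intros c hc'. exists (f' c). apply hd; auto. }
  assert (pr2 : forall c, a < c < b -> derivable_pt id c).
  { intros c _. apply derivable_pt_id. }
  destruct (MVT f id a b pr1 pr2 hab hc) as [c [P HP]].
  { intros; apply derivable_continuous_pt, derivable_pt_id. }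
  exists c; split; auto.
  assert (E1 : derive_pt f c (pr1 c P) = f' c).
  { apply derive_pt_eq_0; apply hd; auto. }
  assert (E2 : derive_pt id c (pr2 c P) = 1).
  { apply derive_pt_eq_0; apply derivable_pt_lim_id. }
  rewrite E1, E2 in HP. unfold id in HP. lra.
Qed.

Lemma MVT_nonneg (f f' : R -> R) a b : a <= b ->
  (forall c, a < c < b -> derivable_pt_lim f c (f' c)) ->
  (forall c, a <= c <= b -> continuity_pt f c) ->
  (forall c, a < c < b -> 0 <= f' c) -> f a <= f b.
Proof.
  intros hab hd hc hp. destruct (Req_dec a b) as [->|hne]; [lra|].
  destruct (MVT_open f f' a b) as [c [hc1 hc2]]; auto; try lra.
  assert (0 <= f' c) by auto. nra.
Qed.

Lemma asin_cont1 : continuity_pt asin 1.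
Proof.
  intros e he.
  set (e' := Rmin e (PI/4)).
  assert (he' : 0 < e') by (unfold e'; apply Rmin_pos; [lra| pose PI_RGT_0; lra]).
  assert (he'1 : e' <= e) by apply Rmin_l.
  assert (he'2 : e' <= PI/4) by apply Rmin_r.
  assert (hc : cos e' < 1).
  { assert (H := cos_decreasing_1 0 e'). rewrite cos_0 in H. apply H; pose PI_RGT_0; lra. }
  exists (1 - cos e'); split; [lra|].
  intros x [[_ hx] hdx]. simpl in *. unfold R_dist in *. rewrite asin_1.
  destruct (Rle_dec 1 x) as [h1|h1].
  { unfold asin. destruct (Rle_dec x (-1)); [lra|]. destruct (Rle_dec 1 x); [|lra].
    unfold Rminus; rewrite Rplus_opp_r, Rabs_R0; lra. }
  assert (hx1 : cos e' < x) by (apply Rabs_def2 in hdx; lra).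
  assert (hce : 0 < cos e') by (apply cos_gt_0; pose PI_RGT_0; lra).
  assert (hb := asin_bound x).
  assert (hsin : sin (asin x) = x) by (apply sin_asin; lra).
  assert (PI / 2 - e' < asin x).
  { destruct (Rlt_dec (PI/2 - e') (asin x)) as [h|h]; auto.
    exfalso. assert (sin (asin x) <= sin (PI/2 - e')).
    { apply sin_incr_1; pose PI_RGT_0; lra. }
    rewrite sin_shift in H. lra. }
  rewrite Rabs_left1; lra.
Qed.

Definition sR (K x : R) : R := sqrt (K * K - x * x).
Definition Phi (K x : R) : R := K * K / 2 * asin (x / K) - x / 2 * sR K x.

Lemma cp_plus f g x : continuity_pt f x -> continuity_pt g x -> continuity_pt (fun y => f y + g y) x.
Proof. intros; apply (continuity_pt_plus f g); auto. Qed.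
Lemma cp_minus f g x : continuity_pt f x -> continuity_pt g x -> continuity_pt (fun y => f y - g y) x.
Proof. intros; apply (continuity_pt_minus f g); auto. Qed.
Lemma cp_mult f g x : continuity_pt f x -> continuity_pt g x -> continuity_pt (fun y => f y * g y) x.
Proof. intros; apply (continuity_pt_mult f g); auto. Qed.
Lemma cp_const c x : continuity_pt (fun _ => c) x.
Proof. apply (continuity_pt_const (fct_cte c)). unfold constant, fct_cte; auto. Qed.
Lemma cp_id x : continuity_pt (fun y => y) x.
Proof. apply derivable_continuous_pt, derivable_pt_id. Qed.
Lemma cp_comp f g x : continuity_pt f x -> continuity_pt g (f x) -> continuity_pt (fun y => g (f y)) x.
Proof. intros; apply (continuity_pt_comp f g); auto. Qed.

Lemma sR_deriv K x : 0 < K * K - x * x -> derivable_pt_lim (sR K) x (- x / sR K x).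
Proof.
  intros h. unfold sR.
  assert (hs : 0 < sqrt (K*K - x*x)) by (apply sqrt_lt_R0; auto).
  eapply dl_eq; [| apply (dl_comp (fun y => K*K - y*y) sqrt)].
  3: apply derivable_pt_lim_sqrt; auto.
  2: { apply dl_minus; [apply dl_const| apply dl_mult; apply dl_id]. }
  cbv beta. field. lra.
Qed.

Lemma sR_cont K x : 0 <= K * K - x * x -> continuity_pt (sR K) x.
Proof.
  intros h. unfold sR. apply (cp_comp (fun y => K*K - y*y) sqrt).
  - apply cp_minus; [apply cp_const | apply cp_mult; apply cp_id].
  - apply continuity_pt_sqrt; auto.
Qed.

Lemma sR_sq K x : 0 <= K * K - x * x -> sR K x * sR K x = K * K - x * x.
Proof. intros; unfold sR; apply sqrt_sqrt; auto. Qed.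

Lemma sR_nonneg K x : 0 <= sR K x.
Proof. apply sqrt_pos. Qed.

Lemma Phi_deriv K x : 0 < K -> -K < x < K -> derivable_pt_lim (Phi K) x (x * x / sR K x).
Proof.
  intros hR hx.
  assert (h : 0 < K * K - x * x) by nra.
  assert (hs : 0 < sR K x) by (apply sqrt_lt_R0; auto).
  assert (hs2 := sR_sq K x (Rlt_le _ _ h)).
  assert (hy : -1 < x / K < 1).
  { split; [apply (Rmult_lt_reg_r K); [lra|]; unfold Rdiv; rewrite Rmult_assoc, Rinv_l; lra|
            apply (Rmult_lt_reg_r K); [lra|]; unfold Rdiv; rewrite Rmult_assoc, Rinv_l; lra]. }
  assert (hasin : derivable_pt_lim asin (x / K) (1 / sqrt (1 - (x/K)²))).
  { apply (derive_pt_eq_1 _ _ _ (derivable_pt_asin _ hy)). apply derive_pt_asin. }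
  assert (E : sqrt (1 - (x/K)²) = sR K x / K).
  { replace (1 - (x/K)²) with ((K*K - x*x) * (/K * /K)) by (unfold Rsqr; field; lra).
    rewrite sqrt_mult_alt by lra. rewrite sqrt_square.
    - unfold sR; field; lra.
    - left; apply Rinv_0_lt_compat; lra. }
  rewrite E in hasin.
  unfold Phi.
  eapply dl_eq; [| apply dl_minus].
  2: { apply dl_mult; [apply dl_const|].
       apply (dl_comp (fun y => y / K) asin); [|exact hasin].

       apply (dl_mult (fun y => y) (fun _ => / K)); [apply dl_id|apply dl_const]. }
  2: { apply dl_mult; [|apply sR_deriv; auto].

       apply (dl_mult (fun y => y) (fun _ => / 2)); [apply dl_id|apply dl_const]. }
  cbv beta. apply (Rmult_eq_reg_r (sR K x)); [|lra].
  transitivity ((K*K - sR K x * sR K x + x * x)/2).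
  - field; lra.
  - rewrite hs2. field; lra.
Qed.

Lemma Phi_cont K x : 0 < K -> 0 <= x <= K -> continuity_pt (Phi K) x.
Proof.
  intros hK hx.
  destruct (Req_dec x K) as [->|hne].
  - unfold Phi. apply cp_minus.
    + apply cp_mult; [apply cp_const|].
      apply (cp_comp (fun y => y / K) asin).
      * apply (cp_mult (fun y => y) (fun _ => / K)); [apply cp_id|apply cp_const].
      * replace (K / K) with 1 by (field; lra). apply asin_cont1.
    + apply cp_mult; [apply (cp_mult (fun y => y) (fun _ => / 2)); [apply cp_id|apply cp_const]|].
      apply sR_cont; nra.
  - apply derivable_continuous_pt. exists (x * x / sR K x). apply Phi_deriv; lra.
Qed.

Definition Ft K m sg := Phi K (m + sg) + m * sR K (m + sg) - Phi K (m - sg) - m * sR K (m - sg).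
Definition Fd K m sg := sg * (m + sg) / sR K (m + sg) - sg * (m - sg) / sR K (m - sg).

Lemma Ft_deriv K m sg : 0 < K -> -K < m - sg -> m + sg < K -> -K < m + sg -> m - sg < K ->
  derivable_pt_lim (Ft K m) sg (Fd K m sg).
Proof.
  intros hK h1 h2 h3 h4.
  assert (hp : 0 < K*K - (m+sg)*(m+sg)) by nra.
  assert (hm : 0 < K*K - (m-sg)*(m-sg)) by nra.
  assert (sp : 0 < sR K (m+sg)) by (apply sqrt_lt_R0; auto).
  assert (sm : 0 < sR K (m-sg)) by (apply sqrt_lt_R0; auto).
  unfold Ft, Fd.
  assert (D1 : derivable_pt_lim (fun s => Phi K (m + s)) sg ((m+sg)*(m+sg)/sR K (m+sg) * (0 + 1))).
  { apply (dl_comp (fun s => m + s) (Phi K)); [apply dl_plus; [apply dl_const|apply dl_id]|].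
    apply Phi_deriv; lra. }
  assert (D2 : derivable_pt_lim (fun s => Phi K (m - s)) sg ((m-sg)*(m-sg)/sR K (m-sg) * (0 - 1))).
  { apply (dl_comp (fun s => m - s) (Phi K)); [apply dl_minus; [apply dl_const|apply dl_id]|].
    apply Phi_deriv; lra. }
  assert (D3 : derivable_pt_lim (fun s => sR K (m + s)) sg (- (m+sg)/sR K (m+sg) * (0 + 1))).
  { apply (dl_comp (fun s => m + s) (sR K)); [apply dl_plus; [apply dl_const|apply dl_id]|].
    apply sR_deriv; lra. }
  assert (D4 : derivable_pt_lim (fun s => sR K (m - s)) sg (- (m-sg)/sR K (m-sg) * (0 - 1))).
  { apply (dl_comp (fun s => m - s) (sR K)); [apply dl_minus; [apply dl_const|apply dl_id]|].
    apply sR_deriv; lra. }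
  eapply dl_eq; [| apply dl_minus; [apply dl_minus; [apply dl_plus|]|]].
  2: exact D1.
  2: apply (dl_mult (fun _ => m)); [apply dl_const| exact D3].
  2: exact D2.
  2: apply (dl_mult (fun _ => m)); [apply dl_const| exact D4].
  field; lra.
Qed.

Lemma Ft_cont K m sg : 0 < K -> 0 <= m - sg -> m + sg <= K -> 0 <= m + sg -> m - sg <= K ->
  continuity_pt (Ft K m) sg.
Proof.
  intros hK h1 h2 h3 h4. unfold Ft.
  apply cp_minus; [apply cp_minus; [apply cp_plus|]|].
  - apply (cp_comp (fun s => m + s) (Phi K)); [apply cp_plus; [apply cp_const|apply cp_id]|].
    apply Phi_cont; lra.
  - apply (cp_mult (fun _ => m)); [apply cp_const|].
    apply (cp_comp (fun s => m + s) (sR K)); [apply cp_plus; [apply cp_const|apply cp_id]|].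
    apply sR_cont; nra.
  - apply (cp_comp (fun s => m - s) (Phi K)); [apply cp_minus; [apply cp_const|apply cp_id]|].
    apply Phi_cont; lra.
  - apply (cp_mult (fun _ => m)); [apply cp_const|].
    apply (cp_comp (fun s => m - s) (sR K)); [apply cp_minus; [apply cp_const|apply cp_id]|].
    apply sR_cont; nra.
Qed.

Lemma Fd_nonneg K m sg : 0 < K -> 0 <= sg -> 0 <= m - sg -> m + sg < K -> 0 <= Fd K m sg.
Proof.
  intros hK h0 h1 h2. unfold Fd.
  assert (hp : 0 < K*K - (m+sg)*(m+sg)) by nra.
  assert (hm : 0 < K*K - (m-sg)*(m-sg)) by nra.
  assert (sp : 0 < sR K (m+sg)) by (apply sqrt_lt_R0; auto).
  assert (sm : 0 < sR K (m-sg)) by (apply sqrt_lt_R0; auto).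
  assert (hle : sR K (m+sg) <= sR K (m-sg)).
  { apply sqrt_le_1_alt. nra. }
  assert (sg * (m - sg) / sR K (m - sg) <= sg * (m + sg) / sR K (m + sg)).
  { unfold Rdiv. apply Rmult_le_compat; try nra.
    - apply Rlt_le, Rinv_0_lt_compat; auto.
    - apply Rinv_le_contravar; auto. }
  lra.
Qed.

Lemma Ft0 K m : Ft K m 0 = 0.
Proof. unfold Ft. rewrite Rplus_0_r, Rminus_0_r. ring. Qed.

Lemma Ft_mono K m a b : 0 < K -> 0 <= a <= b -> b <= m -> m + b <= K -> Ft K m a <= Ft K m b.
Proof.
  intros hK hab hbm hmb.
  apply (MVT_nonneg (Ft K m) (Fd K m)); try lra.
  - intros c hc. apply Ft_deriv; lra.
  - intros c hc. apply Ft_cont; lra.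
  - intros c hc. apply Fd_nonneg; lra.
Qed.

Lemma tooth_nonneg K m : 0 < K -> /2 <= m -> m + /2 <= K -> 0 <= Ft K m (/2).
Proof.
  intros. rewrite <- (Ft0 K m). apply Ft_mono; lra.
Qed.

Lemma sqrt_scal c x : 0 <= c -> 0 <= x -> sqrt (c * c * x) = c * sqrt x.
Proof. intros; rewrite sqrt_mult_alt by nra. rewrite sqrt_square; auto. Qed.

Lemma tooth_strong K m : 16 <= K -> K / 2 <= m -> 0 <= K - (m + /2) <= /100 ->
  sqrt K / 192 <= Ft K m (/2).
Proof.
  intros hK hm he.
  assert (hq : 0 <= Ft K m (/4)) by (rewrite <- (Ft0 K m); apply Ft_mono; lra).
  destruct (MVT_open (Ft K m) (Fd K m) (/4) (/2)) as [c [hc Hc]]; try lra.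
  { intros c hc. apply Ft_deriv; lra. }
  { intros c hc. apply Ft_cont; lra. }
  set (t := sqrt K).
  assert (ht : 0 < t) by (apply sqrt_lt_R0; lra).
  assert (htt : t * t = K) by (apply sqrt_sqrt; lra).
  assert (hp : 0 < K*K - (m+c)*(m+c)) by nra.
  assert (hm' : 0 < K*K - (m-c)*(m-c)) by nra.
  assert (sp : 0 < sR K (m+c)) by (apply sqrt_lt_R0; auto).
  assert (sm : 0 < sR K (m-c)) by (apply sqrt_lt_R0; auto).
  assert (b1 : sR K (m+c) <= 3/4 * t).
  { unfold t. rewrite <- sqrt_scal by lra. apply sqrt_le_1_alt. nra. }
  assert (b2 : 6/7 * t <= sR K (m-c)).
  { unfold t. rewrite <- sqrt_scal by lra. apply sqrt_le_1_alt. nra. }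
  assert (i1 : 4 / 3 / t <= / sR K (m+c)).
  { replace (4/3/t) with (/ (3/4*t)) by (field; lra). apply Rinv_le_contravar; auto. }
  assert (i2 : / sR K (m-c) <= 7/6/t).
  { replace (7/6/t) with (/ (6/7*t)) by (field; lra). apply Rinv_le_contravar; nra. }
  assert (hFd : c * m / (6 * t) <= Fd K m c).
  { unfold Fd, Rdiv.
    assert (c * (m + c) * / sR K (m + c) >= c * m * (4/3/t)).
    { assert (0 <= c * m) by nra. assert (c * m * (4/3/t) <= c * m * / sR K (m+c)) by (apply Rmult_le_compat_l; auto).
      assert (c * m * / sR K (m+c) <= c * (m+c) * / sR K (m+c)).
      { apply Rmult_le_compat_r; [apply Rlt_le, Rinv_0_lt_compat; auto| nra]. }
      lra. }
    assert (c * (m - c) * / sR K (m - c) <= c * m * (7/6/t)).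
    { assert (0 <= c * (m-c)) by nra.
      assert (c * (m-c) * / sR K (m-c) <= c * (m-c) * (7/6/t)) by (apply Rmult_le_compat_l; auto).
      assert (c * (m-c) * (7/6/t) <= c * m * (7/6/t)).
      { apply Rmult_le_compat_r; [unfold Rdiv; apply Rmult_le_pos; [lra| apply Rlt_le, Rinv_0_lt_compat; auto]| nra]. }
      lra. }
    assert (c * m * (4/3/t) - c * m * (7/6/t) = c * m * / (6 * t)) by (field; lra).
    lra. }
  assert (hFd2 : t / 48 <= c * m / (6 * t)).
  { replace (c * m / (6 * t)) with ((c * m) * / t * / 6) by (field; lra).
    replace (t / 48) with ((t * t / 8) * / t * / 6) by (field; lra).
    apply Rmult_le_compat_r; [lra|]. apply Rmult_le_compat_r; [apply Rlt_le, Rinv_0_lt_compat; auto|].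
    nra. }
  nra.
Qed.

Lemma sR_self K : sR K K = 0.
Proof. unfold sR. replace (K*K - K*K) with 0 by ring. apply sqrt_0. Qed.

Lemma Phi_K K : 0 < K -> Phi K K = PI * K * K / 4.
Proof. intros. unfold Phi. rewrite sR_self. replace (K / K) with 1 by (field; lra).
  rewrite asin_1. field. Qed.

Lemma Phi_0 K : 0 < K -> Phi K 0 = 0.
Proof. intros. unfold Phi. replace (0 / K) with 0 by (field; lra). rewrite asin_0. unfold Rdiv; rewrite !Rmult_0_r, !Rmult_0_l; ring. Qed.

Lemma Phi_mono K a b : 0 < K -> 0 <= a <= b -> b <= K -> Phi K a <= Phi K b.
Proof.
  intros. apply (MVT_nonneg (Phi K) (fun x => x * x / sR K x)); try lra.
  - intros c hc. apply Phi_deriv; lra.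
  - intros c hc. apply Phi_cont; lra.
  - intros c hc. assert (0 < sR K c) by (apply sqrt_lt_R0; nra).
    unfold Rdiv. apply Rmult_le_pos; [nra| apply Rlt_le, Rinv_0_lt_compat; auto].
Qed.

Lemma last_partial K a : 0 < K -> 0 <= a <= K ->
  - / 2 * sR K a <= Phi K K - Phi K a - (a + /2) * sR K a.
Proof.
  intros hK ha.
  assert (H : Phi K a + a * sR K a <= Phi K K + a * sR K K).
  { apply (MVT_nonneg (fun x => Phi K x + a * sR K x) (fun x => x * (x - a) / sR K x)); try lra.
    - intros c hc. eapply dl_eq; [| apply dl_plus; [apply Phi_deriv; lra|
        apply (dl_mult (fun _ => a)); [apply dl_const| apply sR_deriv; nra]]].
      assert (0 < sR K c) by (apply sqrt_lt_R0; nra). cbv beta. field. lra.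
    - intros c hc. apply cp_plus; [apply Phi_cont; lra|].
      apply (cp_mult (fun _ => a)); [apply cp_const| apply sR_cont; nra].
    - intros c hc. assert (0 < sR K c) by (apply sqrt_lt_R0; nra).
      unfold Rdiv. apply Rmult_le_pos; [nra| apply Rlt_le, Rinv_0_lt_compat; auto]. }
  rewrite sR_self in H. lra.
Qed.

Definition Wt K p := Phi K (INR p + /2) + INR p * sR K (INR p + /2) - rsum p (fun i => sR K (INR i + /2)).

Lemma Wt_S K p : Wt K (S p) = Wt K p + Ft K (INR (S p)) (/2).
Proof.
  unfold Wt, Ft. simpl rsum. rewrite S_INR.
  replace (INR p + 1 - /2) with (INR p + /2) by field.
  replace (INR p + 1 + /2) with (INR p + /2 + 1) by field. ring.
Qed.

Lemma Wt_nonneg K p : 0 < K -> INR p + /2 <= K -> 0 <= Wt K p.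
Proof.
  intros hK. induction p as [|p IH]; intros hp.
  - unfold Wt. simpl rsum. simpl INR in *.
    assert (Phi K 0 <= Phi K (0 + /2)) by (apply Phi_mono; lra). rewrite Phi_0 in H by lra.
    assert (0 <= sR K (0 + /2)) by apply sR_nonneg. lra.
  - rewrite Wt_S. rewrite S_INR in hp.
    assert (0 <= INR p) by apply pos_INR.
    assert (0 <= Wt K p) by (apply IH; lra).
    assert (0 <= Ft K (INR (S p)) (/2)) by (apply tooth_nonneg; rewrite ?S_INR; lra).
    lra.
Qed.

Lemma rsum_S n f : rsum (S n) f = rsum n f + f n.
Proof. reflexivity. Qed.

Lemma rsum_ext n f g : (forall i, (i < n)%nat -> f i = g i) -> rsum n f = rsum n g.
Proof.
  induction n; simpl; intros H; auto. rewrite IHn by (intros; apply H; lia). rewrite H by lia. auto.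
Qed.

Lemma rsum_zero_tail n m f : (forall i, (n <= i)%nat -> f i = 0) -> (n <= m)%nat -> rsum m f = rsum n f.
Proof.
  intros H hm. induction hm; auto. simpl. rewrite IHhm, H by lia. ring.
Qed.

Lemma D_bound K q eps M : K = INR (S (S q)) - /2 + eps -> 0 <= eps <= /100000 -> 16 <= K ->
  (S (S q) <= M)%nat ->
  sqrt K / 384 <= PI * K * K / 4 - rsum M (fun i => sR K (INR i + /2)).
Proof.
  intros hK he hK16 hM.
  rewrite (rsum_zero_tail (S (S q))); auto.
  2: { intros i hi. unfold sR. apply sqrt_neg_0. apply le_INR in hi.
       assert (0 <= INR i) by apply pos_INR. nra. }
  assert (E : PI * K * K / 4 - rsum (S (S q)) (fun i => sR K (INR i + /2)) =
     Wt K (S q) + (Phi K K - Phi K (INR (S q) + /2) - (INR (S q) + /2 + /2) * sR K (INR (S q) + /2))).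
  { rewrite <- Phi_K by lra. unfold Wt. rewrite rsum_S. cbv beta. set (s0 := sR K (INR (S q) + / 2)). set (x0 := INR (S q)). set (r0 := rsum (S q) (fun i : nat => sR K (INR i + / 2))). set (p0 := Phi K (x0 + /2)). field. }
  rewrite E. rewrite Wt_S.
  assert (hq : 0 <= INR q) by apply pos_INR.
  rewrite !S_INR in hK. rewrite !S_INR.
  assert (h1 : 0 <= Wt K q) by (apply Wt_nonneg; lra).
  assert (h2 : sqrt K / 192 <= Ft K (INR q + 1) (/2)) by (apply tooth_strong; lra).
  assert (h3 := last_partial K (INR q + 1 + /2) ltac:(lra) ltac:(lra)).
  assert (h4 : sR K (INR q + 1 + /2) <= sqrt K / 192).
  { unfold sR. replace (sqrt K / 192) with (sqrt (/192 * /192 * K)).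
    2: { rewrite sqrt_scal by lra. field. }
    apply sqrt_le_1_alt. nra. }
  lra.
Qed.

Lemma FTC_gen (g G : R -> R) a b (pr : Riemann_integrable g a b) : a <= b ->
  (forall x, a <= x <= b -> continuity_pt g x) ->
  (forall x, a <= x <= b -> derivable_pt_lim G x (g x)) ->
  RiemannInt pr = G b - G a.
Proof.
  intros h C0 D.
  rewrite (RiemannInt_P20 h (FTC_P1 h C0) pr).
  assert (H1 := RiemannInt_P29 h C0).
  assert (H2 : antiderivative g G a b).
  { split; auto. intros x hx. exists (exist _ (g x) (D x hx)). reflexivity. }
  destruct (antiderivative_Ucte g _ _ _ _ H1 H2) as [C HC].
  rewrite (HC b), (HC a); try lra.
Qed.

Lemma zero_stepfun f a b : a <= b -> (forall x, a < x < b -> f x = 0) -> IsStepFun f a b.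
Proof.
  intros hab H. exists (a :: b :: nil). exists (0 :: nil).
  unfold adapted_couple; repeat split.
  - intros i hi; simpl in hi. destruct i; [simpl; lra| lia].
  - simpl; unfold Rmin; destruct (Rle_dec a b); lra.
  - simpl; unfold Rmax; destruct (Rle_dec a b); lra.
  - intros i hi; simpl in hi. destruct i; [|lia]. unfold constant_D_eq, open_interval.
    intros x hx; simpl in *. apply H; auto.
Qed.

Lemma zero_integrable f a b : a <= b -> (forall x, a < x < b -> f x = 0) -> Riemann_integrable f a b.
Proof.
  intros hab H eps.
  exists (mkStepFun (zero_stepfun f a b hab H)).
  exists (mkStepFun (StepFun_P4 a b 0)).
  split.
  - intros t ht. simpl. unfold fct_cte. rewrite Rminus_diag_eq by auto. rewrite Rabs_R0. lra.
  - rewrite StepFun_P18. rewrite Rmult_0_l, Rabs_R0. apply cond_pos.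
Qed.

Definition IntVal (f : R -> R) a b v := {pr : Riemann_integrable f a b | RiemannInt pr = v}.

Lemma piece_int (u g G : R -> R) a b : a <= b ->
  (forall x, continuity_pt g x) -> (forall x, derivable_pt_lim G x (g x)) ->
  (forall x, a < x < b -> u x = g x) -> IntVal u a b (G b - G a).
Proof.
  intros hab hg hG hu.
  assert (prg : Riemann_integrable g a b) by (apply continuity_implies_RiemannInt; auto).
  assert (prd : Riemann_integrable (fun x => u x - g x) a b).
  { apply zero_integrable; auto. intros x hx. rewrite hu; auto; ring. }
  assert (pru : Riemann_integrable u a b).
  { refine (@Riemann_integrable_ext (fun x => g x + 1 * (u x - g x)) u a b _ _).
    { intros; ring. }
    apply RiemannInt_P10; auto. }
  exists pru. rewrite (RiemannInt_P18 pru prg); auto.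
  apply FTC_gen; auto.
Qed.

Lemma IntVal_point f a : IntVal f a a 0.
Proof. exists (RiemannInt_P7 f a). apply RiemannInt_P9. Qed.

Lemma IntVal_chasles f a b c v w : IntVal f a b v -> IntVal f b c w -> IntVal f a c (v + w).
Proof.
  intros [p1 h1] [p2 h2]. exists (RiemannInt_P24 p1 p2).
  rewrite <- (RiemannInt_P26 p1 p2). congruence.
Qed.

Lemma PW (u P : R -> R) (L : list R) : forall a b, a <= b ->
  (forall p q, a <= p -> p < q -> q <= b -> (forall x, In x L -> ~ (p < x < q)) ->
     exists g G, (forall x, continuity_pt g x) /\ (forall x, derivable_pt_lim G x (g x)) /\
       (forall x, p < x < q -> u x = g x) /\ G q - G p = P q - P p) ->
  IntVal u a b (P b - P a).
Proof.
  induction L as [|x0 L IH]; intros a b hab H.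
  - destruct (Req_EM_T a b) as [->|hne].
    + replace (P b - P b) with 0 by ring. apply IntVal_point.
    + assert (Hex := H a b (Rle_refl a) ltac:(lra) (Rle_refl b) ltac:(intros x hx; destruct hx)).
      apply constructive_indefinite_description in Hex. destruct Hex as [g Hg].
      apply constructive_indefinite_description in Hg. destruct Hg as [G [h1 [h2 [h3 h4]]]].
      rewrite <- h4. apply (piece_int u g G); auto.
  - destruct (Rlt_dec a x0) as [h1|h1]; [destruct (Rlt_dec x0 b) as [h2|h2]|].
    + replace (P b - P a) with ((P x0 - P a) + (P b - P x0)) by ring.
      apply IntVal_chasles with x0.
      * apply IH; [lra|]. intros p q hp hpq hq HL. apply H; try lra.
        intros x [<-|hx]; [lra| auto].
      * apply IH; [lra|]. intros p q hp hpq hq HL. apply H; try lra.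
        intros x [<-|hx]; [lra| auto].
    + apply IH; auto. intros p q hp hpq hq HL. apply H; try lra.
      intros x [<-|hx]; [lra| auto].
    + apply IH; auto. intros p q hp hpq hq HL. apply H; try lra.
      intros x [<-|hx]; [lra| auto].
Qed.

Lemma IntVal_ext f g a b v : (forall x, f x = g x) -> IntVal f a b v -> IntVal g a b v.
Proof.
  intros H. replace g with f by (apply functional_extensionality; auto). auto.
Qed.

Lemma IntVal_lin f g a b v w l : IntVal f a b v -> IntVal g a b w ->
  IntVal (fun x => f x + l * g x) a b (v + l * w).
Proof.
  intros [p1 h1] [p2 h2]. exists (RiemannInt_P10 l p1 p2).
  rewrite (RiemannInt_P13 p1 p2). congruence.
Qed.

Lemma IntVal_const c a b : IntVal (fun _ => c) a b (c * (b - a)).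
Proof. exists (RiemannInt_P14 a b c). apply RiemannInt_P15. Qed.

Lemma cos_m2pi x : cos (x - 2 * PI) = cos x.
Proof. rewrite cos_minus, cos_2PI, sin_2PI. ring. Qed.
Lemma sin_m2pi x : sin (x - 2 * PI) = sin x.
Proof. rewrite sin_minus, cos_2PI, sin_2PI. ring. Qed.
Lemma sin_p2pi x : sin (x + 2 * PI) = sin x.
Proof. rewrite sin_plus, cos_2PI, sin_2PI. ring. Qed.
Lemma cos_p2pi x : cos (x + 2 * PI) = cos x.
Proof. rewrite cos_plus, cos_2PI, sin_2PI. ring. Qed.

Lemma cos_in a x : 0 <= a <= PI -> Rabs x < a -> cos a < cos x.
Proof.
  intros ha hx.
  destruct (Rle_dec 0 x).
  - rewrite Rabs_right in hx by lra. apply cos_decreasing_1; lra.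
  - rewrite Rabs_left in hx by lra. rewrite <- (cos_neg x).
    apply cos_decreasing_1; lra.
Qed.

Lemma cos_out a x : 0 <= a -> a < Rabs x -> Rabs x <= PI -> cos x < cos a.
Proof.
  intros ha hx hp.
  destruct (Rle_dec 0 x).
  - rewrite Rabs_right in * by lra. apply cos_decreasing_1; lra.
  - rewrite Rabs_left in * by lra. rewrite <- (cos_neg x).
    apply cos_decreasing_1; lra.
Qed.

Section Arc.
Variables (r c th : R).
Hypothesis hr : 0 < r.
Hypothesis hc : 0 < c.
Hypothesis hcr : c <= r.
Hypothesis hth : - PI < th <= PI.

Let al := acos (c / r).
Let sa := sin al.

Lemma cr_bound : 0 < c / r <= 1.
Proof.
  split. apply Rdiv_lt_0_compat; lra.
  apply (Rmult_le_reg_r r); [lra|]. unfold Rdiv. rewrite Rmult_assoc, Rinv_l; lra.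
Qed.

Lemma al_bound : 0 <= al < PI / 2.
Proof.
  assert (hb := acos_bound (c/r)). assert (hcr' := cr_bound).
  assert (hca : cos al = c / r) by (apply cos_acos; lra).
  fold al in hb. split; [lra|].
  destruct (Rlt_dec al (PI/2)) as [h|h]; auto. exfalso.
  assert (cos al <= 0).
  { destruct (Req_dec al (PI/2)) as [e|e]. rewrite e, cos_PI2; lra.
    left. rewrite <- cos_PI2. apply cos_decreasing_1; lra. }
  lra.
Qed.

Lemma cos_al : cos al = c / r.
Proof. assert (hcr' := cr_bound). apply cos_acos; lra. Qed.

Lemma sa_val : r * sa = sqrt (r * r - c * c).
Proof.
  assert (hcr' := cr_bound). unfold sa, al. rewrite sin_acos by lra.
  replace (r * r - c * c) with (r * r * (1 - (c/r)²)) by (unfold Rsqr; field; lra).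
  rewrite sqrt_mult_alt by nra. rewrite sqrt_square by lra. auto.
Qed.

Lemma sa_nonneg : 0 <= sa.
Proof. assert (h := al_bound). unfold sa. apply sin_ge_0; lra. Qed.

Definition tt (x : R) := r * cos (x - th).

Lemma tt_gt x : cos al < cos (x - th) -> c < tt x.
Proof. intros h. rewrite cos_al in h. unfold tt.
  apply (Rmult_lt_compat_l r) in h; auto. unfold Rdiv in h.
  rewrite <- Rmult_assoc, (Rmult_comm r c), Rmult_assoc, Rinv_r, Rmult_1_r in h; lra. Qed.

Lemma tt_lt x : cos (x - th) < cos al -> tt x < c.
Proof. intros h. rewrite cos_al in h. unfold tt.
  apply (Rmult_lt_compat_l r) in h; auto. unfold Rdiv in h.
  rewrite <- Rmult_assoc, (Rmult_comm r c), Rmult_assoc, Rinv_r, Rmult_1_r in h; lra. Qed.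

Definition Pa (x : R) : R :=
  let f := x - th in
  if Rle_dec f (- al) then - (r * sa) else
  if Rle_dec f al then r * sin f else
  if Rle_dec f (2 * PI - al) then r * sa else
  if Rle_dec f (2 * PI + al) then 2 * (r * sa) + r * sin f else 3 * (r * sa).


Lemma sa0 : al = 0 -> sa = 0.
Proof. intros h. unfold sa. rewrite h. apply sin_0. Qed.

Lemma Hs1 : sin (- al) = - sa.
Proof. unfold sa; apply sin_neg. Qed.
Lemma Hs2 : sin (2 * PI - al) = - sa.
Proof. unfold sa; rewrite <- (sin_m2pi (2*PI - al)); replace (2*PI - al - 2*PI) with (- al) by ring; apply sin_neg. Qed.
Lemma Hs3 : sin (2 * PI + al) = sa.
Proof. unfold sa; rewrite <- (sin_m2pi (2*PI + al)); f_equal; ring. Qed.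

Lemma PaA x : x - th <= - al -> Pa x = - (r * sa).
Proof. intros h. unfold Pa. destruct (Rle_dec (x - th) (-al)); [auto|lra]. Qed.
Lemma PaB x : - al <= x - th <= al -> Pa x = r * sin (x - th).
Proof. intros h. unfold Pa. destruct (Rle_dec (x - th) (-al)).
  - replace (x - th) with (- al) by lra. rewrite Hs1. ring.
  - destruct (Rle_dec (x - th) al); [auto|lra]. Qed.
Lemma PaC x : al <= x - th <= 2 * PI - al -> Pa x = r * sa.
Proof. intros h. assert (hal := al_bound). unfold Pa. destruct (Rle_dec (x - th) (-al)).
  - rewrite sa0 by lra. ring.
  - destruct (Rle_dec (x - th) al).
    + replace (x - th) with al by lra. auto.
    + destruct (Rle_dec (x - th) (2*PI - al)); [auto|lra]. Qed.
Lemma PaD x : 2 * PI - al <= x - th <= 2 * PI + al -> Pa x = 2 * (r * sa) + r * sin (x - th).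
Proof. intros h. assert (hal := al_bound). assert (hpi := PI_RGT_0). unfold Pa.
  destruct (Rle_dec (x - th) (-al)); [lra|].
  destruct (Rle_dec (x - th) al); [lra|].
  destruct (Rle_dec (x - th) (2*PI - al)).
  - replace (x - th) with (2*PI - al) by lra. rewrite Hs2. ring.
  - destruct (Rle_dec (x - th) (2*PI + al)); [auto|lra]. Qed.
Lemma PaE x : 2 * PI + al <= x - th -> Pa x = 3 * (r * sa).
Proof. intros h. assert (hal := al_bound). assert (hpi := PI_RGT_0). unfold Pa.
  destruct (Rle_dec (x - th) (-al)); [lra|].
  destruct (Rle_dec (x - th) al); [lra|].
  destruct (Rle_dec (x - th) (2*PI - al)).
  - rewrite sa0 by lra. ring.
  - destruct (Rle_dec (x - th) (2*PI + al)).
    + replace (x - th) with (2*PI + al) by lra. rewrite Hs3. ring.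
    + auto. Qed.

Lemma arc_int (u : R -> R) :
  (forall x, c < tt x -> u x = tt x) -> (forall x, tt x < c -> u x = 0) ->
  IntVal u 0 (2 * PI) (2 * sqrt (r * r - c * c)).
Proof.
  intros Hu1 Hu2.
  assert (hal := al_bound). assert (hsa := sa_nonneg). assert (hpi := PI_RGT_0).
  assert (hPI4 := PI_4).
  replace (2 * sqrt (r * r - c * c)) with (Pa (2 * PI) - Pa 0).
  2: { rewrite <- sa_val. unfold Pa.
       replace (0 - th) with (- th) by ring.
       destruct (Rle_dec (- th) (- al)).
       - destruct (Rle_dec (2*PI - th) (-al)); [lra|]. destruct (Rle_dec (2*PI - th) al); [lra|].
         destruct (Rle_dec (2*PI - th) (2*PI - al)); [ring| lra].
       - destruct (Rle_dec (- th) al).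
         + destruct (Rle_dec (2*PI - th) (-al)); [lra|]. destruct (Rle_dec (2*PI - th) al); [lra|].
           destruct (Rle_dec (2*PI - th) (2*PI - al)); [lra|].
           destruct (Rle_dec (2*PI - th) (2*PI + al)); [|lra].
           replace (2 * PI - th) with (- th + 2 * PI) by ring. rewrite sin_p2pi. ring.
         + destruct (Rle_dec (2*PI - th) (-al)); [lra|]. destruct (Rle_dec (2*PI - th) al); [lra|].
           destruct (Rle_dec (2*PI - th) (2*PI - al)); [lra|].
           destruct (Rle_dec (2*PI - th) (2*PI + al)); [lra|]. destruct (Rle_dec (- th) (2*PI - al)); [ring|lra]. }
  apply (PW u Pa (th - al :: th + al :: th + 2*PI - al :: th + 2*PI + al :: nil)); [lra|].
  intros p q hp hpq hq HL.
  assert (N1 : th - al <= p \/ q <= th - al).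
  { destruct (Rle_dec (th - al) p); [left; auto|]. destruct (Rle_dec q (th - al)); [right; auto|].
    exfalso; apply (HL (th - al)); simpl; auto; lra. }
  assert (N2 : th + al <= p \/ q <= th + al).
  { destruct (Rle_dec (th + al) p); [left; auto|]. destruct (Rle_dec q (th + al)); [right; auto|].
    exfalso; apply (HL (th + al)); simpl; auto; lra. }
  assert (N3 : th + 2*PI - al <= p \/ q <= th + 2*PI - al).
  { destruct (Rle_dec (th + 2*PI - al) p); [left; auto|]. destruct (Rle_dec q (th + 2*PI - al)); [right; auto|].
    exfalso; apply (HL (th + 2*PI - al)); simpl; auto; lra. }
  assert (N4 : th + 2*PI + al <= p \/ q <= th + 2*PI + al).
  { destruct (Rle_dec (th + 2*PI + al) p); [left; auto|]. destruct (Rle_dec q (th + 2*PI + al)); [right; auto|].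
    exfalso; apply (HL (th + 2*PI + al)); simpl; auto; lra. }
  set (m := (p + q) / 2).
  assert (hm : p < m < q) by (unfold m; lra).
  assert (Gc : forall k, (forall x, continuity_pt (fun _ : R => 0) x) /\ (forall x, derivable_pt_lim (fun _ : R => k) x ((fun _ => 0) x))).
  { intros k; split; intros x; [apply derivable_continuous_pt; exists 0; apply dl_const| apply dl_const]. }
  assert (Gt : (forall x, continuity_pt tt x) /\ (forall x, derivable_pt_lim (fun y => r * sin (y - th)) x (tt x))).
  { split; intros x.
    - apply derivable_continuous_pt. exists (0 * cos (x - th) + r * (- sin (x - th) * (1 - 0))).
      unfold tt. apply (dl_mult (fun _ => r) (fun y => cos (y - th))); [apply dl_const|].
      apply (dl_comp (fun y => y - th) cos); [apply dl_minus; [apply dl_id| apply dl_const]| apply derivable_pt_lim_cos].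
    - unfold tt. eapply dl_eq; [| apply (dl_mult (fun _ => r)); [apply dl_const|
        apply (dl_comp (fun y => y - th) sin); [apply dl_minus; [apply dl_id| apply dl_const]| apply derivable_pt_lim_sin]]].
      ring. }
  destruct (Rle_dec (m - th) (- al)) as [c1|c1].
  {
    exists (fun _ => 0), (fun _ => 0). destruct (Gc 0) as [g1 g2]. repeat split; auto.
    - intros x hx. apply Hu2. apply tt_lt. apply cos_out; try lra.
      all: rewrite Rabs_left by lra; lra.
    - rewrite (PaA q), (PaA p) by lra. ring. }
  destruct (Rle_dec (m - th) al) as [c2|c2].
  {
    exists tt, (fun y => r * sin (y - th)). destruct Gt as [g1 g2]. repeat split; auto.
    - intros x hx. apply Hu1. apply tt_gt. apply cos_in; [lra|].
      apply Rabs_def1; lra.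
    - rewrite (PaB q), (PaB p) by lra. ring. }
  destruct (Rle_dec (m - th) (2 * PI - al)) as [c3|c3].
  {
    exists (fun _ => 0), (fun _ => 0). destruct (Gc 0) as [g1 g2]. repeat split; auto.
    - intros x hx. apply Hu2. apply tt_lt.
      destruct (Rle_dec (x - th) PI).
      + apply cos_out; try lra; rewrite Rabs_right by lra; lra.
      + rewrite <- cos_m2pi. apply cos_out; try lra; rewrite Rabs_left by lra; lra.
    - rewrite (PaC q), (PaC p) by lra. ring. }
  destruct (Rle_dec (m - th) (2 * PI + al)) as [c4|c4].
  {
    exists tt, (fun y => r * sin (y - th)). destruct Gt as [g1 g2]. repeat split; auto.
    - intros x hx. apply Hu1. apply tt_gt. rewrite <- (cos_m2pi (x - th)). apply cos_in; [lra|].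
      apply Rabs_def1; lra.
    - rewrite (PaD q), (PaD p) by lra. ring. }
  {
    exists (fun _ => 0), (fun _ => 0). destruct (Gc 0) as [g1 g2]. repeat split; auto.
    - intros x hx. apply Hu2. apply tt_lt. rewrite <- cos_m2pi.
      apply cos_out; try lra; rewrite Rabs_right by lra; lra.
    - rewrite (PaE q), (PaE p) by lra. ring. }
Qed.
End Arc.

Lemma Zfloor_spec x : IZR (Defs.Zfloor x) <= x < IZR (Defs.Zfloor x) + 1.
Proof.
  unfold Defs.Zfloor. destruct (archimed x) as [h1 h2]. rewrite minus_IZR. simpl. lra.
Qed.

Definition b1 (c t : R) := if Rle_dec c t then 1 else 0.
Definition b2 (c t : R) := if Rlt_dec c (- t) then 1 else 0.

Lemma count_lemma (y : R) (M : nat) :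
  rsum M (fun i => b1 (INR i + /2) y - b2 (INR i + /2) y) =
  IZR (Z.max (- Z.of_nat M) (Z.min (Z.of_nat M) (Defs.Zfloor (y + /2)))).
Proof.
  destruct (Zfloor_spec (y + /2)) as [hf1 hf2]. set (n := Defs.Zfloor (y + /2)) in *.
  induction M as [|M IH].
  - simpl. replace (Z.max 0 (Z.min 0 n)) with 0%Z by lia. reflexivity.
  - rewrite rsum_S, IH. rewrite Nat2Z.inj_succ. rewrite INR_IZR_INZ.
    assert (hz0 : 0 <= IZR (Z.of_nat M)) by (apply IZR_le; lia). set (z := Z.of_nat M) in *.
    unfold b1, b2. destruct (Rle_dec (IZR z + /2) y) as [h1|h1];
      destruct (Rlt_dec (IZR z + /2) (- y)) as [h2|h2].
    + lra.
    + assert (IZR z < IZR n) by lra. apply lt_IZR in H.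
      assert (IZR (- z) <= IZR n) by (rewrite opp_IZR; lra). apply le_IZR in H0.
      replace (Z.max (- Z.succ z) (Z.min (Z.succ z) n)) with (Z.max (- z) (Z.min z n) + 1)%Z by lia.
      rewrite plus_IZR. ring.
    + assert (IZR n < IZR (- z)) by (rewrite opp_IZR; lra). apply lt_IZR in H.
      assert (IZR n <= IZR z) by lra. apply le_IZR in H0.
      replace (Z.max (- Z.succ z) (Z.min (Z.succ z) n)) with (Z.max (- z) (Z.min z n) - 1)%Z by lia.
      rewrite minus_IZR. ring.
    + assert (IZR n < IZR z + 1) by lra. assert (IZR n <= IZR z).
      { apply IZR_le. rewrite <- plus_IZR in H. apply lt_IZR in H. lia. }
      apply le_IZR in H0.
      assert (IZR (- z) - 1 < IZR n) by (rewrite opp_IZR; lra).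
      assert (IZR (- z) <= IZR n).
      { apply IZR_le. rewrite <- minus_IZR in H1. apply lt_IZR in H1. lia. }
      apply le_IZR in H2.
      replace (Z.max (- Z.succ z) (Z.min (Z.succ z) n)) with (Z.max (- z) (Z.min z n))%Z by lia.
      ring.
Qed.

Lemma rsum_scal k n f : rsum n (fun i => k * f i) = k * rsum n f.
Proof. induction n; simpl; [ring| rewrite IHn; ring]. Qed.
Lemma rsum_plus n f g : rsum n (fun i => f i + g i) = rsum n f + rsum n g.
Proof. induction n; simpl; [ring| rewrite IHn; ring]. Qed.
Lemma rsum_const n k : rsum n (fun _ => k) = INR n * k.
Proof. induction n; simpl rsum; [simpl; ring| rewrite IHn, S_INR; ring]. Qed.

Definition ind1 (c t : R) := if Rle_dec c t then t else 0.
Definition ind2 (c t : R) := if Rlt_dec c (- t) then - t else 0.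

Lemma decomp d t M : 0 < d -> Rabs t <= d * INR M ->
  t * Qd d t = d * rsum M (fun i => ind1 (d * (INR i + /2)) t + ind2 (d * (INR i + /2)) t).
Proof.
  intros hd ht. set (y := t / d).
  assert (hy : Rabs y <= INR M).
  { unfold y. unfold Rdiv. rewrite Rabs_mult, Rabs_inv, (Rabs_right d) by lra.
    apply (Rmult_le_reg_r d); [lra|]. rewrite Rmult_assoc, Rinv_l by lra. lra. }
  assert (hty : t = d * y) by (unfold y; field; lra).
  unfold Qd. fold y.
  destruct (Zfloor_spec (y + /2)) as [hf1 hf2]. set (n := Defs.Zfloor (y + /2)) in *.
  assert (hcl : Z.max (- Z.of_nat M) (Z.min (Z.of_nat M) n) = n).
  { rewrite INR_IZR_INZ in hy. apply Rabs_le_between' in hy || idtac.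
    assert (h1 : IZR n < IZR (Z.of_nat M) + 1).
    { apply Rabs_def2b in hy || idtac. revert hy. unfold Rabs. destruct (Rcase_abs y); intros; lra. }
    assert (h2 : IZR (- Z.of_nat M) - 1 < IZR n).
    { rewrite opp_IZR. revert hy. unfold Rabs. destruct (Rcase_abs y); intros; lra. }
    rewrite <- plus_IZR in h1. rewrite <- minus_IZR in h2. apply lt_IZR in h1. apply lt_IZR in h2. lia. }
  rewrite <- hcl. unfold n. rewrite <- count_lemma.
  replace (t * (d * rsum M (fun i : nat => b1 (INR i + / 2) y - b2 (INR i + / 2) y))) with
    (d * (t * rsum M (fun i : nat => b1 (INR i + / 2) y - b2 (INR i + / 2) y))) by ring.
  rewrite <- rsum_scal. f_equal. apply rsum_ext. intros i hi.
  unfold ind1, ind2, b1, b2. rewrite hty.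
  assert (hi0 : 0 <= INR i) by apply pos_INR.
  destruct (Rle_dec (INR i + /2) y); destruct (Rle_dec (d * (INR i + /2)) (d * y)); try nra;
  destruct (Rlt_dec (INR i + /2) (- y)); destruct (Rlt_dec (d * (INR i + /2)) (- (d * y))); try nra.
Qed.

Lemma angle ex ey : ex ^ 2 + ey ^ 2 = 1 ->
  exists th, (- PI < th <= PI) /\ cos th = ex /\ sin th = ey.
Proof.
  intros h. assert (hb : -1 <= ex <= 1) by nra.
  assert (hs : sqrt (1 - ex²) = Rabs ey).
  { replace (1 - ex²) with (ey * ey) by (unfold Rsqr; nra). apply sqrt_Rsqr_abs. }
  assert (hab := acos_bound ex). assert (hpi := PI_RGT_0).
  destruct (Rle_dec 0 ey).
  - exists (acos ex). split; [lra|]. split; [apply cos_acos; auto|].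
    rewrite sin_acos, hs by auto. apply Rabs_right; lra.
  - exists (- acos ex). split; [split; [|lra]|].
    + destruct (Req_dec (acos ex) PI) as [e|e]; [|lra].
      exfalso. assert (cos (acos ex) = ex) by (apply cos_acos; auto). rewrite e, cos_PI in H.
      subst ex. nra.
    + rewrite cos_neg, sin_neg. split; [apply cos_acos; auto|].
      rewrite sin_acos, hs by auto. rewrite Rabs_left; lra.
Qed.

Lemma cs_bound ex ey x : ex ^ 2 + ey ^ 2 = 1 -> cos x * ex + sin x * ey <= 1.
Proof.
  intros h. assert (hc := sin2_cos2 x). unfold Rsqr in hc.
  assert (h2 : (cos x * ex + sin x * ey) ^ 2 + (cos x * ey - sin x * ex) ^ 2 = 1).
  { replace 1 with ((sin x * sin x + cos x * cos x) * (ex ^ 2 + ey ^ 2)) by (rewrite hc, h; ring). ring. }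
  assert (0 <= (cos x * ey - sin x * ex) ^ 2) by (apply pow2_ge_0).
  nra.
Qed.

Lemma arc_int_vec r c ex ey (u : R -> R) : 0 < r -> 0 < c -> ex ^ 2 + ey ^ 2 = 1 ->
  (forall x, c < r * cos x * ex + r * sin x * ey -> u x = r * cos x * ex + r * sin x * ey) ->
  (forall x, r * cos x * ex + r * sin x * ey < c -> u x = 0) ->
  IntVal u 0 (2 * PI) (2 * sqrt (r * r - c * c)).
Proof.
  intros hr hc he H1 H2.
  destruct (Rle_dec c r) as [hcr|hcr].
  - destruct (constructive_indefinite_description _ (angle ex ey he)) as [th [hth [hc1 hs1]]].
    assert (E : forall x, r * cos x * ex + r * sin x * ey = tt r th x).
    { intros x. unfold tt. rewrite cos_minus, hc1, hs1. ring. }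
    apply (arc_int r c th); auto.
    + intros x hx. rewrite <- E in *. auto.
    + intros x hx. rewrite <- E in *. auto.
  - replace (2 * sqrt (r * r - c * c)) with (0 * (2 * PI - 0)).
    2: { rewrite sqrt_neg_0 by nra. ring. }
    apply (IntVal_ext (fun _ => 0)); [|apply IntVal_const].
    intros x. symmetry. apply H2.
    assert (cos x * ex + sin x * ey <= 1) by (apply cs_bound; auto). nra.
Qed.

Lemma cos2_int r ex ey : ex ^ 2 + ey ^ 2 = 1 ->
  IntVal (fun x => (r * cos x * ex + r * sin x * ey) * (r * cos x * ex + r * sin x * ey)) 0 (2 * PI) (PI * r * r).
Proof.
  intros he.
  destruct (constructive_indefinite_description _ (angle ex ey he)) as [th [hth [hc1 hs1]]].
  set (G := fun x => r * r / 2 * ((x - th) + sin (x - th) * cos (x - th))).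
  replace (PI * r * r) with (G (2 * PI) - G 0).
  2: { unfold G. replace (2 * PI - th) with ((0 - th) + 2 * PI) by ring.
       rewrite sin_p2pi, cos_p2pi. field. }
  apply (piece_int _ (fun x => (r * cos (x - th)) * (r * cos (x - th))) G); [pose PI_RGT_0; lra| | |].
  - intros x. apply derivable_continuous_pt.
    exists ((0 * cos (x - th) + r * (- sin (x - th) * (1 - 0))) * (r * cos (x - th)) + r * cos (x - th) * (0 * cos (x - th) + r * (- sin (x - th) * (1 - 0)))).
    apply (dl_mult (fun y => r * cos (y - th)) (fun y => r * cos (y - th)));
    apply (dl_mult (fun _ => r) (fun y => cos (y - th))); try apply dl_const;
    apply (dl_comp (fun y => y - th) cos); [apply dl_minus; [apply dl_id| apply dl_const]| apply derivable_pt_lim_cos|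
      apply dl_minus; [apply dl_id| apply dl_const]| apply derivable_pt_lim_cos].
  - intros x. unfold G.
    eapply dl_eq; [| apply (dl_mult (fun _ => r * r / 2)); [apply dl_const|
      apply dl_plus; [apply dl_minus; [apply dl_id|apply dl_const]|
        apply (dl_mult (fun y => sin (y - th)) (fun y => cos (y - th)));
        [apply (dl_comp (fun y => y - th) sin); [apply dl_minus; [apply dl_id| apply dl_const]| apply derivable_pt_lim_sin]|
         apply (dl_comp (fun y => y - th) cos); [apply dl_minus; [apply dl_id| apply dl_const]| apply derivable_pt_lim_cos]]]]].
    cbv beta. assert (hsc := sin2_cos2 (x - th)). unfold Rsqr in hsc.
    transitivity (r * r / 2 * (1 + cos (x - th) * cos (x - th) - sin (x - th) * sin (x - th))); [field|].
    assert (Hs : sin (x - th) * sin (x - th) = 1 - cos (x - th) * cos (x - th)) by lra.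
    rewrite Hs. field.
  - intros x _. rewrite cos_minus, hc1, hs1. ring.
Qed.

Lemma IntVal_rsum (F : nat -> R -> R) (v : nat -> R) a b M :
  (forall i, IntVal (F i) a b (v i)) ->
  IntVal (fun x => rsum M (fun i => F i x)) a b (rsum M v).
Proof.
  intros H. induction M as [|M IH].
  - simpl. assert (X := IntVal_const 0 a b). rewrite Rmult_0_l in X. exact X.
  - simpl. apply (IntVal_ext (fun x => rsum M (fun i => F i x) + 1 * F M x)).
    { intros; ring. }
    replace (rsum M v + v M) with (rsum M v + 1 * v M) by ring.
    apply IntVal_lin; auto.
Qed.

Definition fq (d t : R) := t * (t - Qd d t).

Lemma fj_int r d M ex ey : 0 < r -> 0 < d -> r <= d * INR M -> ex ^ 2 + ey ^ 2 = 1 ->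
  IntVal (fun x => fq d (r * cos x * ex + r * sin x * ey)) 0 (2 * PI)
    (PI * r * r + - d * rsum M (fun i => 2 * sqrt (r * r - (d * (INR i + /2)) * (d * (INR i + /2)))
                                     + 1 * (2 * sqrt (r * r - (d * (INR i + /2)) * (d * (INR i + /2)))))).
Proof.
  intros hr hd hM he.
  set (t := fun x => r * cos x * ex + r * sin x * ey).
  assert (ht : forall x, Rabs (t x) <= r).
  { intros x. unfold t. apply Rabs_le. split.
    - assert (cos x * (- ex) + sin x * (- ey) <= 1) by (apply cs_bound; lra). nra.
    - assert (cos x * ex + sin x * ey <= 1) by (apply cs_bound; lra). nra. }
  apply (IntVal_ext (fun x => t x * t x + - d * rsum M (fun i => ind1 (d * (INR i + /2)) (t x) + 1 * ind2 (d * (INR i + /2)) (t x)))).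
  { intros x. unfold fq. fold (t x).
    replace (t x * (t x - Qd d (t x))) with (t x * t x - t x * Qd d (t x)) by ring.
    rewrite (decomp d (t x) M) by (auto; specialize (ht x); lra).
    rewrite (rsum_ext M (fun i => ind1 (d * (INR i + /2)) (t x) + 1 * ind2 (d * (INR i + /2)) (t x))
                        (fun i => ind1 (d * (INR i + /2)) (t x) + ind2 (d * (INR i + /2)) (t x))) by (intros; ring).
    ring. }
  apply IntVal_lin; [apply cos2_int; auto|].
  apply (IntVal_rsum (fun i x => ind1 (d * (INR i + /2)) (t x) + 1 * ind2 (d * (INR i + /2)) (t x))).
  intros i. assert (hc : 0 < d * (INR i + /2)) by (assert (0 <= INR i) by apply pos_INR; nra).
  apply IntVal_lin.
  - apply arc_int_vec with ex ey; auto.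
    + intros x hx. unfold ind1, t. destruct (Rle_dec _ _); [auto| unfold t in hx; lra].
    + intros x hx. unfold ind1, t. destruct (Rle_dec _ _); [unfold t in hx; lra| auto].
  - apply arc_int_vec with (- ex) (- ey); auto.
    + rewrite <- he. ring.
    + intros x hx. unfold ind2, t. destruct (Rlt_dec _ _); [ring| exfalso; apply n; lra].
    + intros x hx. unfold ind2, t. destruct (Rlt_dec _ _); [lra| auto].
Qed.

Lemma CS x1 x2 y1 y2 : y1 * x1 + y2 * x2 <= sqrt (y1 ^ 2 + y2 ^ 2) * sqrt (x1 * x1 + x2 * x2).
Proof.
  rewrite <- sqrt_mult_alt by nra.
  destruct (Rle_dec (y1 * x1 + y2 * x2) 0) as [h|h].
  - assert (0 <= sqrt ((y1 ^ 2 + y2 ^ 2) * (x1 * x1 + x2 * x2))) by apply sqrt_pos. lra.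
  - rewrite <- (sqrt_square (y1 * x1 + y2 * x2)) at 1 by lra.
    apply sqrt_le_1_alt.
    assert (0 <= (y1 * x2 - y2 * x1) ^ 2) by apply pow2_ge_0. nra.
Qed.

Lemma frame_ineq d N ex ey x1 x2 r : UNTF N ex ey -> 0 < r -> x1 * x1 + x2 * x2 = r * r ->
  2 / INR N * rsum N (fun j => fq d (x1 * ex j + x2 * ey j)) <= r * Ed d N ex ey x1 x2.
Proof.
  intros [hN [hu [hxx [hyy hxy]]]] hr hx.
  assert (hNp : 0 < INR N) by (apply lt_0_INR; auto).
  set (c := fun j => Qd d (x1 * ex j + x2 * ey j)).
  assert (E1 : rsum N (fun j => fq d (x1 * ex j + x2 * ey j)) =
     x1 * x1 * rsum N (fun j => ex j * ex j) + 2 * (x1 * x2) * rsum N (fun j => ex j * ey j)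
     + x2 * x2 * rsum N (fun j => ey j * ey j)
     - (x1 * rsum N (fun j => c j * ex j) + x2 * rsum N (fun j => c j * ey j))).
  { clear hN hu hxx hyy hxy hNp. unfold c. induction N as [|N IH]; simpl; [ring|].
    rewrite IH. unfold fq. ring. }
  rewrite hxx, hyy, hxy in E1.
  unfold Ed. fold c.
  set (y1 := x1 - 2 / INR N * rsum N (fun j => c j * ex j)).
  set (y2 := x2 - 2 / INR N * rsum N (fun j => c j * ey j)).
  assert (E2 : 2 / INR N * rsum N (fun j => fq d (x1 * ex j + x2 * ey j)) = y1 * x1 + y2 * x2).
  { rewrite E1. unfold y1, y2. transitivity (x1 * x1 + x2 * x2 - 2 / INR N * (x1 * rsum N (fun j => c j * ex j) + x2 * rsum N (fun j => c j * ey j))); [field; lra| ring]. }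
  rewrite E2. change (Ed d N ex ey x1 x2) with (sqrt (y1 ^ 2 + y2 ^ 2)).
  rewrite (Rmult_comm r).
  replace r with (sqrt (x1 * x1 + x2 * x2)) by (rewrite hx; apply sqrt_square; lra).
  apply CS.
Qed.

Lemma IntVal_rsum' (F : nat -> R -> R) (v : nat -> R) a b M :
  (forall i, (i < M)%nat -> IntVal (F i) a b (v i)) ->
  IntVal (fun x => rsum M (fun i => F i x)) a b (rsum M v).
Proof.
  intros H. induction M as [|M IH].
  - simpl. assert (X := IntVal_const 0 a b). rewrite Rmult_0_l in X. exact X.
  - simpl. apply (IntVal_ext (fun x => rsum M (fun i => F i x) + 1 * F M x)).
    { intros; ring. }
    replace (rsum M v + v M) with (rsum M v + 1 * v M) by ring.
    apply IntVal_lin; auto.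
Qed.

Lemma IntVal_scal f a b v k : IntVal f a b v -> IntVal (fun x => k * f x) a b (k * v).
Proof.
  intros H. apply (IntVal_ext (fun x => 0 + k * f x)); [intros; ring|].
  replace (k * v) with (0 * (b - a) + k * v) by ring.
  apply IntVal_lin; auto. apply (IntVal_const 0).
Qed.

Lemma sqrt_scal' c x : 0 <= c -> sqrt (c * c * x) = c * sqrt x.
Proof.
  intros hc. destruct (Rle_dec 0 x). apply sqrt_scal; auto.
  rewrite !sqrt_neg_0 by nra. ring.
Qed.

Theorem theorem1p2 :
  exists eps0 C : R, 0 < eps0 /\ 0 < C /\
  exists R0 : R,
  forall r d : R, 0 < r -> 0 < d -> R0 <= r / d ->
  0 <= r / d + / 2 - IZR (Zfloor (r / d + / 2)) <= eps0 ->
  forall (N : nat) (ex ey : nat -> R), UNTF N ex ey ->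
  forall pr : Riemann_integrable (Ed2 d r N ex ey) 0 (2 * PI),
  sqrt (RiemannInt pr) >= C * (d * sqrt d) / sqrt r.
Proof.
  exists (/100000), (/192). split; [lra|]. split; [lra|]. exists 16.
  intros r d hr hd hR he N ex ey hF pr.
  assert (hF' := hF). destruct hF' as [hN [hu _]].
  assert (hNp : 0 < INR N) by (apply lt_0_INR; auto).
  set (Rr := r / d) in *.
  assert (hrR : r = d * Rr) by (unfold Rr; field; lra).
  set (k := Zfloor (Rr + /2)) in *.
  assert (hk := Zfloor_bound (Rr + /2)). fold k in hk.
  assert (hk16 : (15 < k)%Z) by (apply lt_IZR; lra).
  set (kn := Z.to_nat k).
  assert (hkn : INR kn = IZR k) by (unfold kn; rewrite INR_IZR_INZ, Z2Nat.id by lia; auto).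
  assert (hkn2 : (2 <= kn)%nat) by (unfold kn; lia).
  destruct kn as [|[|q]] eqn:Ekn; [lia|lia|].
  set (M := S (S (S q))).
  assert (hD := D_bound Rr q (Rr + /2 - IZR k) M ltac:(rewrite hkn; ring) he ltac:(lra) ltac:(unfold M; lia)).
  set (J := PI * r * r + - d * rsum M (fun i => 2 * sqrt (r * r - (d * (INR i + /2)) * (d * (INR i + /2)))
                                     + 1 * (2 * sqrt (r * r - (d * (INR i + /2)) * (d * (INR i + /2)))))).
  assert (hJ : J = 4 * d * d * (PI * Rr * Rr / 4 - rsum M (fun i => sR Rr (INR i + /2)))).
  { unfold J. rewrite (rsum_ext M _ (fun i => (4 * d) * sR Rr (INR i + /2))).
    - rewrite rsum_scal. rewrite hrR. field.
    - intros i _. unfold sR. rewrite hrR.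
      replace (d * Rr * (d * Rr) - d * (INR i + / 2) * (d * (INR i + / 2))) with
        (d * d * (Rr * Rr - (INR i + /2) * (INR i + /2))) by ring.
      rewrite sqrt_scal' by lra. ring. }
  assert (hJpos : d * d * sqrt Rr / 96 <= J).
  { rewrite hJ. assert (0 < d * d) by nra. nra. }
  assert (hsR : 0 < sqrt Rr) by (apply sqrt_lt_R0; lra).
  assert (hJ0 : 0 < J) by (assert (0 < d * d) by nra; assert (0 < d * d * sqrt Rr) by nra; lra).
  set (h := fun x => 2 / (INR N * r) * rsum N (fun j => fq d (r * cos x * ex j + r * sin x * ey j))).
  assert (Ih : IntVal h 0 (2 * PI) (2 / (INR N * r) * rsum N (fun _ => J))).
  { apply IntVal_scal. apply (IntVal_rsum' (fun j x => fq d (r * cos x * ex j + r * sin x * ey j))).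
    intros j hj. apply fj_int; [lra|lra| |apply hu; auto].
    rewrite hrR. unfold M. rewrite (S_INR (S (S q))). rewrite hkn. apply Rmult_le_compat_l; lra. }
  rewrite rsum_const in Ih.
  set (a := J / (4 * r)).
  assert (ha : 0 < a) by (unfold a; apply Rdiv_lt_0_compat; lra).
  assert (Ig := IntVal_lin (fun _ => - (a * a)) h 0 (2 * PI) _ _ (2 * a) (IntVal_const (- (a * a)) 0 (2 * PI)) Ih).
  destruct Ig as [prg hg].
  assert (Hle : RiemannInt prg <= RiemannInt pr).
  { apply RiemannInt_P19; [pose PI_RGT_0; lra|]. intros x _.
    unfold Ed2. set (E := Ed d N ex ey (r * cos x) (r * sin x)).
    assert (hE0 : 0 <= E) by (unfold E, Ed; apply sqrt_pos).
    assert (Hf := frame_ineq d N ex ey (r * cos x) (r * sin x) r hF hr).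
    assert (hcs := sin2_cos2 x). unfold Rsqr in hcs.
    assert (Hf' : 2 / INR N * rsum N (fun j => fq d (r * cos x * ex j + r * sin x * ey j)) <= r * E).
    { apply Hf. replace (r * r) with (r * r * (sin x * sin x + cos x * cos x)) by (rewrite hcs; ring). ring. }
    assert (hhE : h x <= E).
    { unfold h. replace (2 / (INR N * r) * rsum N (fun j => fq d (r * cos x * ex j + r * sin x * ey j)))
        with (/ r * (2 / INR N * rsum N (fun j => fq d (r * cos x * ex j + r * sin x * ey j)))) by (field; lra).
      apply (Rmult_le_reg_l r); [lra|]. rewrite <- Rmult_assoc, Rinv_r, Rmult_1_l by lra. lra. }
    assert (0 <= (E - a) * (E - a)) by apply Rle_0_sqr. simpl.
    assert (a * h x <= a * E) by (apply Rmult_le_compat_l; lra). nra. }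
  rewrite hg in Hle.
  assert (hval : J * J / (2 * (r * r)) <= - (a * a) * (2 * PI - 0) + 2 * a * (2 / (INR N * r) * (INR N * J))).
  { unfold a. assert (hpi := PI_4). assert (0 < J * J) by nra.
    replace (- (J / (4 * r) * (J / (4 * r))) * (2 * PI - 0) + 2 * (J / (4 * r)) * (2 / (INR N * r) * (INR N * J)))
      with (J * J / (r * r) * (1 - PI / 8)) by (field; lra).
    replace (J * J / (2 * (r * r))) with (J * J / (r * r) * (1 / 2)) by (field; lra).
    apply Rmult_le_compat_l; [|lra]. apply Rlt_le, Rdiv_lt_0_compat; nra. }
  assert (Hs : J / (2 * r) <= sqrt (RiemannInt pr)).
  { rewrite <- (sqrt_square (J / (2 * r))) by (apply Rlt_le, Rdiv_lt_0_compat; lra).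
    apply sqrt_le_1_alt.
    replace (J / (2 * r) * (J / (2 * r))) with (J * J / (4 * (r * r))) by (field; lra).
    assert (J * J / (4 * (r * r)) <= J * J / (2 * (r * r))).
    { unfold Rdiv. apply Rmult_le_compat_l; [nra|]. apply Rinv_le_contravar; nra. }
    lra. }
  apply Rle_ge. eapply Rle_trans; [| exact Hs].
  assert (hsd : 0 < sqrt d) by (apply sqrt_lt_R0; lra).
  assert (hsr : 0 < sqrt r) by (apply sqrt_lt_R0; lra).
  assert (hsd2 : sqrt d * sqrt d = d) by (apply sqrt_sqrt; lra).
  assert (hsr2 : sqrt r * sqrt r = r) by (apply sqrt_sqrt; lra).
  assert (hsR2 : sqrt Rr = sqrt r / sqrt d) by (unfold Rr; apply sqrt_div_alt; lra).
  assert (E : / 192 * (d * sqrt d) / sqrt r = d * d * sqrt Rr / 96 / (2 * r)).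
  { rewrite hsR2. set (sr := sqrt r) in *. set (sd := sqrt d) in *.
    rewrite <- hsr2, <- hsd2. field. split; lra. }
  rewrite E. unfold Rdiv at 1 3. apply Rmult_le_compat_r; [apply Rlt_le, Rinv_0_lt_compat; lra|]. lra.
Qed.
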